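(* Let $k$ be an odd integer with $k\ge 5$, let $D$ be a strong $k$-quasi-transitive digraph with $\mathrm{diam}(D)\ge k+2$, let $u,v\in V(D)$ with $d(u,v)=k+2$, and let $P=x_0x_1\ldots x_{k+2}$ be a shortest $(u,v)$-path. Let $I=\{x\in V(D)\setminus V(P): x\Rightarrow V(P)\}$ and $W=\{x\in V(D)\setminus V(P): V(P)\Rightarrow x\}$. If $D[V(P)]$ is a semicomplete digraph, then $x\mapsto V(P)$ for every $x\in I$ and $V(P)\mapsto y$ for every $y\in W$.
   Context: All digraphs are finite, without loops or multiple arcs (opposite arcs allowed). $x\rightarrow y$ means $xy\in A(D)$; $x,y$ are adjacent if $x\rightarrow y$ or $y\rightarrow x$. For disjoint vertex sets $X,Y$ (singletons identified with vertices): $X\rightarrow Y$ means every vertex of $X$ dominates every vertex of $Y$; $X\Rightarrow Y$ means there is no arc from $Y$ to $X$; $X\mapsto Y$ means both $X\rightarrow Y$ and $X\Rightarrow Y$. For $k\ge 2$, $D$ is $k$-quasi-transitive if for every path $x_0x_1\ldots x_k$ of length $k$, $x_0$ and $x_k$ are adjacent. $d(x,y)$ is the length of a shortest $(x,y)$-path, $\mathrm{diam}(D)=\max_{x,y}d(x,y)$. $D[S]$ is the induced subdigraph; a semicomplete digraph is one in which every two distinct vertices are adjacent. *)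

(* Defs.v *)
From mathcomp Require Import all_boot.
Set Implicit Arguments. Unset Strict Implicit. Unset Printing Implicit Defensive.

Section Digraphs.
Variables (T : finType) (arc : rel T).

Definition adjacent (x y : T) : bool := arc x y || arc y x.

(* x :: s is a (directed) path: consecutive arcs, distinct vertices.
   It starts at x, ends at last x s, and has length size s. *)
Definition dipath (x : T) (s : seq T) : bool := path arc x s && uniq (x :: s).

Definition quasi_transitive (k : nat) : Prop :=
  forall x s, dipath x s -> size s = k -> adjacent x (last x s).

Definition strong : Prop :=
  forall x y, exists s, dipath x s /\ last x s = y.

Definition dist_is (x y : T) (n : nat) : Prop :=
  (exists s, [/\ dipath x s, last x s = y & size s = n]) /\
  (forall s, dipath x s -> last x s = y -> n <= size s).

Definition diam_ge (m : nat) : Prop :=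
  exists x y n, dist_is x y n /\ m <= n.

End Digraphs.

(* Main.v *)
Require Import Defs.
From mathcomp Require Import all_boot.
From mathcomp Require Import zify.
Set Implicit Arguments. Unset Strict Implicit. Unset Printing Implicit Defensive.

Lemma path_iota (T : Type) (e : rel T) (f : nat -> T) a m :
  (forall b, a <= b -> b < a + m -> e (f b) (f b.+1)) ->
  path e (f a) (map f (iota a.+1 m)).
Proof.
elim: m a => [|m IH] a H //=.
rewrite H ?andTb; [|lia|lia].
apply: IH => b hb1 hb2; apply: H; lia.
Qed.

Lemma last_iota a m : last a (iota a.+1 m) = a + m.
Proof. by elim: m a => [|m IH] a /=; [rewrite addn0 | rewrite IH addSnnS]. Qed.

Lemma last_map_iota (T : Type) (f : nat -> T) a m :
  last (f a) (map f (iota a.+1 m)) = f (a + m).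
Proof. by rewrite last_map last_iota. Qed.

Lemma uniq_map_idx (T : finType) (f : nat -> T) N l :
  (forall i j, i <= N -> j <= N -> f i = f j -> i = j) ->
  all (fun i => i <= N) l -> uniq l -> uniq (map f l).
Proof.
move=> Hinj /allP Hall Hu; rewrite map_inj_in_uniq //.
move=> i j hi hj; apply: Hinj; [exact: Hall | exact: Hall].
Qed.

Lemma all_iota_le a m N : a + m <= N.+1 -> all (fun i => i <= N) (iota a m).
Proof. move=> H; apply/allP => i; rewrite mem_iota; lia. Qed.

Lemma idx_step (T : finType) (e : rel T) x p b :
  path e x p -> b < size p -> e (nth x (x :: p) b) (nth x (x :: p) b.+1).
Proof. by move=> /pathP H hb; apply: H. Qed.

Lemma idx_inj (T : finType) (x : T) p i j :
  uniq (x :: p) -> i <= size p -> j <= size p ->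
  nth x (x :: p) i = nth x (x :: p) j -> i = j.
Proof.
move=> hu hi hj E; apply/eqP; rewrite -(nth_uniq x _ _ hu) ?E //=; lia.
Qed.

Lemma idx_last (T : finType) (x : T) p : nth x (x :: p) (size p) = last x p.
Proof. by rewrite -[size p]/((size (x :: p)).-1) nth_last. Qed.

Lemma idx_mem (T : finType) (x : T) p y :
  y \in x :: p -> exists2 i, i <= size p & y = nth x (x :: p) i.
Proof.
move=> hy; exists (index y (x :: p)); last by rewrite nth_index.
by move: hy; rewrite -index_mem /=; lia.
Qed.

Lemma idx_in (T : finType) (x : T) p i : i <= size p -> nth x (x :: p) i \in x :: p.
Proof. by move=> hi; apply: mem_nth => /=; lia. Qed.

Lemma idx_sub (T : finType) (e : rel T) x p a m :
  dipath e x p -> a + m <= size p ->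
  dipath e (nth x (x :: p) a) (map (nth x (x :: p)) (iota a.+1 m)).
Proof.
case/andP=> hp hu hm; apply/andP; split.
  by apply: path_iota => b _ hb; apply: idx_step => //; lia.
rewrite -[_ :: map _ _]/(map (nth x (x :: p)) (iota a m.+1)).
apply: (uniq_map_idx (N := size p)); last exact: iota_uniq.
  by move=> i j; apply: idx_inj.
by apply: all_iota_le; lia.
Qed.

Lemma idx_shortcut (T : finType) (e : rel T) x p i j :
  dipath e x p -> i + 2 <= j -> j <= size p ->
  e (nth x (x :: p) i) (nth x (x :: p) j) ->
  exists p', [/\ dipath e x p', last x p' = last x p & size p' < size p].
Proof.
set f := nth x (x :: p).
move=> dp hij hj harc; case/andP: (dp) => hp hu.
exists (map f (iota 1 i ++ iota j (size p - j).+1)); split.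
- apply/andP; split.
    rewrite map_cat cat_path; apply/andP; split.
      by rewrite -[x]/(f 0); apply: path_iota => b _ hb; apply: idx_step => //; lia.
    rewrite -[x]/(f 0) last_map_iota add0n /= harc /=.
    by apply: path_iota => b _ hb; apply: idx_step => //; lia.
  rewrite -[x :: _]/(map f (0 :: iota 1 i ++ iota j (size p - j).+1)).
  apply: (uniq_map_idx (N := size p)).
  - by move=> a b; apply: idx_inj.
  - have -> : 0 :: iota 1 i ++ iota j (size p - j).+1 = iota 0 i.+1 ++ iota j (size p - j).+1 by [].
    rewrite all_cat !all_iota_le //; lia.
  - have -> : 0 :: iota 1 i ++ iota j (size p - j).+1 = iota 0 i.+1 ++ iota j (size p - j).+1 by [].
    rewrite cat_uniq !iota_uniq andbT andTb.
    apply/hasPn => a; rewrite !mem_iota; lia.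
- rewrite -(idx_last x p) -/f; rewrite -[x in last x _]/(f 0) last_map last_cat last_iota /= last_iota.
  by congr f; lia.
- rewrite size_map size_cat !size_iota; lia.
Qed.

Lemma idx_prefix (T : finType) (e : rel T) x p i :
  dipath e x p -> i <= size p ->
  [/\ dipath e x (map (nth x (x :: p)) (iota 1 i)),
      last x (map (nth x (x :: p)) (iota 1 i)) = nth x (x :: p) i &
      size (map (nth x (x :: p)) (iota 1 i)) = i].
Proof.
move=> dp hi; split.
- by have := idx_sub dp (a := 0) (m := i); rewrite add0n; apply.
- by rewrite -[x]/(nth x (x :: p) 0) last_map_iota.
- by rewrite size_map size_iota.
Qed.

Lemma step1 (T : finType) (arc : rel T) (k : nat) (hk : 4 <= k)
  (hqt : quasi_transitive arc k) (P : pred T)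
  (Pwalk : forall y, P y -> forall l, l <= k - 2 ->
     exists q, [/\ dipath arc y q, size q = l & all P q])
  (z : T) (zP : ~~ P z) (noin : forall y, P y -> ~~ arc y z)
  (H0 : forall y, P y -> ~~ arc z y) :
  forall n p, size p < n -> dipath arc z p -> P (last z p) -> False.
Proof.
elim=> [|n IHn] p //= hsz dp lp.
have IH : forall p', dipath arc z p' -> P (last z p') -> size p' < size p -> False.
  move=> p' d l h; apply: (IHn p') => //; lia.
clear IHn.
have r2 : 2 <= size p.
  move: dp lp; case: p {IH hsz} => [|a [|b p']] //=.
  - by move=> _ hz; move: zP; rewrite hz.
  - by case/andP=> /andP[ha _] _ hPa; move: (H0 _ hPa); rewrite ha.
set r := size p.
have Wr : P (nth z (z :: p) r) by rewrite /r idx_last.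
have WnP : forall i, i < r -> ~~ P (nth z (z :: p) i).
  case=> [|i] hi; first by [].
  apply/negP => hPi; have [d l sz] := idx_prefix dp (i := i.+1) (ltnW hi).
  by apply: (IH _ d); rewrite ?l ?sz.
have Wnarc : forall i y, i + 2 <= r -> P y -> ~~ arc (nth z (z :: p) i) y.
  move=> i y hi hy; apply/negP => ha.
  have [d l sz] := idx_prefix dp (i := i) (ltac:(lia)).
  apply: (IH (rcons (map (nth z (z :: p)) (iota 1 i)) y)).
  - apply/andP; split.
      by rewrite rcons_path; case/andP: d => -> _; rewrite l ha.
    rewrite -rcons_cons rcons_uniq; case/andP: d => _ ->; rewrite andbT.
    apply/negP; rewrite -[z :: _]/(map (nth z (z :: p)) (iota 0 i.+1)).
    case/mapP=> c; rewrite mem_iota => hc E.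
    by move: (WnP c (ltac:(lia))); rewrite -E hy.
  - by rewrite last_rcons.
  - rewrite size_rcons sz; lia.
have Wsc : forall i j, i + 2 <= j -> j <= r ->
    ~~ arc (nth z (z :: p) i) (nth z (z :: p) j).
  move=> i j h1 h2; apply/negP => ha.
  have [p' [d l sz]] := idx_shortcut dp h1 h2 ha.
  by apply: (IH p' d); rewrite ?l.
have base : forall i, r - i <= k -> i + 2 <= r ->
    exists2 y, P y & arc y (nth z (z :: p) i).
  move=> i h1 h2.
  have [q [dq sq aq]] := Pwalk _ Wr (k - (r - i)) (ltac:(lia)).
  have ds := idx_sub dp (a := i) (m := r - i) (ltac:(lia)).
  have lastL : last (nth z (z :: p) i) (map (nth z (z :: p)) (iota i.+1 (r - i)))
      = nth z (z :: p) r.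
    by rewrite last_map_iota; have -> : i + (r - i) = r by lia.
  have dL : dipath arc (nth z (z :: p) i)
      (map (nth z (z :: p)) (iota i.+1 (r - i)) ++ q).
    case/andP: ds => ps us; case/andP: dq => pq uq.
    apply/andP; split; first by rewrite cat_path ps lastL pq.
    rewrite -cat_cons cat_uniq us /=; move: uq; rewrite cons_uniq => /andP[nq ->].
    rewrite andbT; apply/hasPn => y yq; apply/negP.
    rewrite -[_ :: map _ _]/(map (nth z (z :: p)) (iota i (r - i).+1)).
    case/mapP=> c; rewrite mem_iota => hc E.
    have hPy : P y by move/allP: aq; apply.
    case: (ltnP c r) => hcr.
      by move: (WnP c hcr); rewrite -E hPy.
    have Ecr : c = r by lia.
    by move: nq; rewrite -Ecr -E yq.
  have := hqt _ _ dL; rewrite size_cat size_map size_iota sq.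
  have -> : r - i + (k - (r - i)) = k by lia.
  move=> /(_ erefl); rewrite last_cat lastL.
  have hPe : P (last (nth z (z :: p) r) q).
    have := mem_last (nth z (z :: p) r) q; rewrite in_cons => /orP[/eqP -> //|].
    by move/allP: aq; apply.
  case/orP=> ha.
    by move: (Wnarc i _ h2 hPe); rewrite ha.
  by exists (last (nth z (z :: p) r) q).
have E : forall d i, r - 2 - i <= d -> i + 2 <= r ->
    exists2 y, P y & arc y (nth z (z :: p) i).
  elim=> [|d IHd] i hd hi.
    by apply: base => //; lia.
  case: (leqP (r - i) k) => hrk; first exact: base.
  have [y Py ay] := IHd (i + 2) (ltac:(lia)) (ltac:(lia)).
  have ch : arc (nth z (z :: p) (i + k)) (nth z (z :: p) i).
    have := hqt _ _ (idx_sub dp (a := i) (m := k) (ltac:(lia))).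
    rewrite size_map size_iota last_map_iota => /(_ erefl) /orP[h|//].
    by move: (Wsc i (i + k) (ltac:(lia)) (ltac:(lia))); rewrite h.
  have Eio : iota (i + 2) (k - 1) = (i + 2) :: iota (i + 2).+1 (k - 2).
    by have -> : k - 1 = (k - 2).+1 by lia.
  have dL : dipath arc y (map (nth z (z :: p)) (iota (i + 2) (k - 1) ++ [:: i])).
    apply/andP; split.
      rewrite map_cat cat_path Eio /= ay /=.
      have := idx_sub dp (a := i + 2) (m := k - 2) (ltac:(lia)).
      case/andP=> -> _ /=; rewrite last_map_iota.
      have -> : i + 2 + (k - 2) = i + k by lia.
      by rewrite ch.
    rewrite cons_uniq; apply/andP; split.
      apply/negP => /mapP [c hc E]; move: hc; rewrite mem_cat mem_iota inE => hc.
      by move: (WnP c (ltac:(lia))); rewrite -E Py.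
    apply: (uniq_map_idx (N := r)); first by move=> a b; apply: idx_inj; case/andP: dp.
      by rewrite all_cat all_iota_le /= ?andbT; lia.
    rewrite cat_uniq iota_uniq /= andbT mem_iota; lia.
  have := hqt _ _ dL; rewrite size_map size_cat size_iota /=.
  have -> : k - 1 + 1 = k by lia.
  move=> /(_ erefl); rewrite map_cat last_cat /= => /orP[h|h].
    by exists y.
  by move: (Wnarc i y (ltac:(lia)) Py); rewrite h.
have [y Py ay] := E (r - 2) 0 (ltac:(lia)) (ltac:(lia)).
by move: (noin y Py); rewrite ay.
Qed.

Lemma part1 (T : finType) (arc : rel T) (k : nat) (k_ge5 : 5 <= k)
  (hqt : quasi_transitive arc k) (hstrong : strong arc)
  (u : T) (s : seq T) (hP : dipath arc u s) (hPlen : size s = k + 2)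
  (hmin : forall s', dipath arc u s' -> last u s' = last u s -> k + 2 <= size s')
  (hsemi : forall a b, a \in u :: s -> b \in u :: s -> a != b -> adjacent arc a b) :
  forall x, x \notin u :: s -> (forall y, y \in u :: s -> ~~ arc y x) ->
     forall y, y \in u :: s -> arc x y.
Proof.
move=> z zP noin.
pose X := nth u (u :: s).
have Xst : forall b, b < k + 2 -> arc (X b) (X b.+1).
  move=> b hb; apply: idx_step; first (by case/andP: hP); by rewrite hPlen.
have Xinj : forall i j, i <= k + 2 -> j <= k + 2 -> X i = X j -> i = j.
  move=> i j hi hj; apply: idx_inj; first (by case/andP: hP); by rewrite hPlen.
have Xin : forall i, i <= k + 2 -> X i \in u :: s.
  by move=> i hi; apply: idx_in; rewrite hPlen.
have Xnofwd : forall i j, i + 2 <= j -> j <= k + 2 -> ~~ arc (X i) (X j).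
  move=> i j h1 h2; apply/negP => ha.
  have [p' [d l sz]] := idx_shortcut hP h1 (ltac:(rewrite hPlen; lia)) ha.
  by move: (hmin p' d l) sz; rewrite hPlen; lia.
have Xback : forall i j, i + 2 <= j -> j <= k + 2 -> arc (X j) (X i).
  move=> i j h1 h2.
  have := hsemi (X i) (X j) (Xin i (ltac:(lia))) (Xin j h2).
  have -> : X i != X j by apply/eqP => /Xinj; lia.
  by move=> /(_ isT) /orP[h|//]; move: (Xnofwd i j h1 h2); rewrite h.
have Xpath : forall a m, a + m <= k + 2 -> path arc (X a) (map X (iota a.+1 m)).
  by move=> a m h; apply: path_iota => b _ hb; apply: Xst; lia.
have Xuniq : forall l, all (fun i => i <= k + 2) l -> uniq l -> uniq (map X l).
  by move=> l; apply: uniq_map_idx.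
have XallP : forall l, all (fun i => i <= k + 2) l -> all (mem (u :: s)) (map X l).
  move=> l /allP hl; apply/allP => y /mapP [c hc ->]; exact: Xin (hl c hc).
have Pwalk : forall y, (y \in u :: s) -> forall l, l <= k - 2 ->
     exists q, [/\ dipath arc y q, size q = l & all (mem (u :: s)) q].
  move=> y hy l hl; have [b hb ->] := idx_mem hy; rewrite hPlen in hb.
  case: (leqP (b + l) (k + 2)) => hbl.
    exists (map X (iota b.+1 l)); split.
    - by apply: idx_sub; rewrite ?hPlen.
    - by rewrite size_map size_iota.
    - by apply: XallP; apply: all_iota_le; lia.
  pose c := l - (k + 2 - b).
  have Ec : iota 0 c = 0 :: iota 1 c.-1 by have -> : c = c.-1.+1 by rewrite /c; lia.
  exists (map X (iota b.+1 (k + 2 - b) ++ iota 0 c)); split.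
  - apply/andP; split.
      rewrite map_cat cat_path Xpath ?last_map_iota; last by lia.
      have -> : b + (k + 2 - b) = k + 2 by lia.
      by rewrite Ec /= Xback ?Xpath //; rewrite /c; lia.
    rewrite -[X b :: _]/(map X (b :: iota b.+1 (k + 2 - b) ++ iota 0 c)).
    apply: Xuniq.
      by rewrite -[b :: _]/(iota b (k + 2 - b).+1 ++ _) all_cat !all_iota_le // /c; lia.
    rewrite -[b :: _]/(iota b (k + 2 - b).+1 ++ _) cat_uniq !iota_uniq andbT andTb.
    by apply/hasPn => a; rewrite !mem_iota /c; lia.
  - by rewrite size_map size_cat !size_iota /c; lia.
  - by apply: XallP; rewrite all_cat !all_iota_le // /c; lia.
have [i0 hi0 a0] : exists2 i0, i0 <= k + 2 & arc z (X i0).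
  case: (boolP [exists y, (y \in u :: s) && arc z y]).
    case/existsP=> y /andP[hy ay]; have [b hb E] := idx_mem hy.
    by exists b; [rewrite -hPlen | rewrite /X -E].
  rewrite negb_exists => /forallP H0.
  have [p [dp lp]] := hstrong z u.
  exfalso; apply: (step1 (k := k) (arc := arc) (P := mem (u :: s)) _ hqt Pwalk
       (z := z) _ _ _ (n := (size p).+1) (p := p)) => //.
  all: try lia.
  all: try (by move=> y hy; have hy' : y \in u :: s := hy; move: (H0 y); rewrite hy').
  all: try (by move=> y hy; have hy' : y \in u :: s := hy; exact: noin y hy').
  all: try (by have h : last z p \in u :: s by rewrite lp mem_head).
have reach : forall i l, i <= k + 2 -> all (fun i => i <= k + 2) l -> uniq (i :: l) ->
    path arc (X i) (map X l) -> size l = k - 1 -> arc z (X i) -> arc z (X (last i l)).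
  move=> i l hi hl hu hp hs ha.
  have dL : dipath arc z (X i :: map X l).
    apply/andP; split; first by rewrite /= ha hp.
    rewrite cons_uniq; apply/andP; split.
      apply/negP => hz; apply: (negP zP).
      rewrite -[X i :: _]/(map X (i :: l)) in hz.
      have : all (mem (u :: s)) (map X (i :: l)) by apply: XallP; rewrite /= hi hl.
      by move/allP => /(_ z hz).
    by apply: (Xuniq (i :: l)) => //=; rewrite hi hl.
  have := hqt _ _ dL; rewrite /= size_map hs; have -> : (k - 1).+1 = k by lia.
  move=> /(_ erefl); rewrite last_map => /orP[//|h].
  have hl' : last i l <= k + 2.
    by have := mem_last i l; rewrite in_cons => /orP[/eqP->//|/(allP hl)].
  by move: (noin _ (Xin _ hl')); rewrite h.
have down : forall i, 1 <= i -> i <= k + 2 -> arc z (X i) -> arc z (X i.-1).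
  move=> i h1 h2 ha; case: (leqP i (k - 1)) => hik.
    case: i h1 h2 ha hik => [//|i'] _ h2 ha hik /=.
    have := reach i'.+1 (iota i'.+2 (k - 1 - i'.+1) ++ 0 :: iota 1 i') h2.
    rewrite last_cat /= last_iota add0n; apply => //.
    - by rewrite all_cat all_iota_le /= ?all_iota_le //; lia.
    - rewrite mem_cat mem_iota negb_or -[0 :: iota 1 i']/(iota 0 i'.+1) mem_iota.
      rewrite cat_uniq !iota_uniq andbT andTb; apply/andP; split; first lia.
      apply/hasPn => a; rewrite !mem_iota; lia.
    - rewrite map_cat cat_path Xpath ?last_map_iota; last by lia.
      by rewrite /= Xback ?Xpath //; lia.
    - by rewrite size_cat /= !size_iota; lia.
  pose a := i + 1 - k.
  have := reach i (a :: iota a.+1 (k - 2)) h2.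
  rewrite /= last_iota.
  have -> : a + (k - 2) = i.-1 by rewrite /a; lia.
  apply => //.
  - by rewrite /= all_iota_le ?andbT /a; lia.
  - rewrite -[a :: iota a.+1 _]/(iota a (k - 2).+1) !mem_iota iota_uniq andbT /a.
    apply/andP; split; lia.
  - by rewrite /= Xback ?Xpath /a //; lia.
  - by rewrite size_iota; lia.
have up : forall a, a + (k - 1) <= k + 2 -> arc z (X a) -> arc z (X (a + (k - 1))).
  move=> a h ha; have := reach a (iota a.+1 (k - 1)) (ltac:(lia)).
  rewrite last_iota; apply => //.
  - by apply: all_iota_le; lia.
  - rewrite /= mem_iota iota_uniq andbT; lia.
  - by apply: Xpath.
  - by rewrite size_iota.
have downall : forall j, j <= k + 2 -> arc z (X j) -> forall i, i <= j -> arc z (X i).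
  elim=> [|j IHj] hj ha i hi.
    by have -> : i = 0 by lia.
  case: (ltnP i j.+1) => hij.
    by apply: IHj => //; [lia | exact: (down j.+1)].
  by have -> : i = j.+1 by lia.
have a1 : arc z (X 0) by apply: (downall i0).
have a2 : arc z (X (k - 1)) by have := up 0 (ltac:(lia)) a1; rewrite add0n.
have a3 : arc z (X 3) by apply: (downall (k - 1)) => //; lia.
have a4 : arc z (X (k + 2)).
  by have := up 3 (ltac:(lia)) a3; have -> : 3 + (k - 1) = k + 2 by lia.
move=> y hy; have [b hb ->] := idx_mem hy.
by apply: (downall (k + 2)) => //; rewrite -hPlen.
Qed.

Lemma dipath_rev (T : finType) (e : rel T) x p :
  dipath e x p ->
  [/\ dipath (fun a b => e b a) (last x p) (rev (belast x p)),
      last (last x p) (rev (belast x p)) = x &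
      size (rev (belast x p)) = size p].
Proof.
have E : last x p :: rev (belast x p) = rcons (rev p) x.
  by rewrite -rev_rcons -lastI rev_cons.
case/andP=> hp hu; split.
- apply/andP; split; first by rewrite rev_path.
  by rewrite -rev_rcons -lastI rev_uniq.
- by rewrite -[last (last x p) _]/(last x (last x p :: rev (belast x p))) E last_rcons.
- by rewrite size_rev size_belast.
Qed.

Lemma mem_rev_belast (T : eqType) (x y : T) p :
  (y \in last x p :: rev (belast x p)) = (y \in x :: p).
Proof. by rewrite -rev_rcons -lastI mem_rev. Qed.

Theorem lemma2p12 (T : finType) (arc : rel T) (arc_irr : irreflexive arc)
  (k : nat) (k_odd : odd k) (k_ge5 : 5 <= k)
  (hqt : quasi_transitive arc k) (hstrong : strong arc)
  (hdiam : diam_ge arc (k + 2))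
  (u v : T) (huv : dist_is arc u v (k + 2))
  (s : seq T) (hP : dipath arc u s) (hPv : last u s = v)
  (hPlen : size s = k + 2)
  (hsemi : forall a b, a \in u :: s -> b \in u :: s -> a != b -> adjacent arc a b) :
  (forall x, x \notin u :: s -> (forall y, y \in u :: s -> ~~ arc y x) ->
     forall y, y \in u :: s -> arc x y && ~~ arc y x) /\
  (forall x, x \notin u :: s -> (forall y, y \in u :: s -> ~~ arc x y) ->
     forall y, y \in u :: s -> arc y x && ~~ arc x y).
Proof.
case: huv => _ hmin.
split.
  move=> x hx hin y hy; rewrite hin // andbT.
  apply: (part1 k_ge5 hqt hstrong hP hPlen _ hsemi hx hin hy).
  by move=> s' d l; apply: (hmin s' d); rewrite l.
pose arc' := fun a b => arc b a.
have [dP' lP' sP'] := dipath_rev hP.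
move=> x hx hin y hy; rewrite hin // andbT.
have := @part1 T arc' k k_ge5 _ _ _ _ dP' _ _ _ x _ _ y.
apply.
- move=> a q dq sq; have [d l sz] := dipath_rev dq.
  have := hqt _ _ d; rewrite sz l => /(_ sq).
  by rewrite /adjacent /arc' orbC.
- move=> a b; have [q [dq lq]] := hstrong b a.
  have [d l _] := dipath_rev dq; move: d l; rewrite lq => d l.
  by exists (rev (belast b q)); split.
- by rewrite size_rev size_belast.
- move=> s' d l; have [d2 l2 sz2] := dipath_rev d.
  rewrite -sz2; move: d2 l2; rewrite l lP' => d2 l2.
  by apply: (hmin _ d2); rewrite l2 hPv.
- move=> a b ha hb hab; rewrite /adjacent /arc' orbC.
  by apply: hsemi => //; [move: ha | move: hb]; rewrite mem_rev_belast.
- by rewrite mem_rev_belast.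
- by move=> z; rewrite mem_rev_belast; apply: hin.
- by rewrite mem_rev_belast.
Qed.
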